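(* Let $A\in\mathbb{C}^{m\times n}$, $B\in\mathbb{C}^{n\times p}$, $C\in\mathbb{C}^{p\times q}$ and $M=ABC$. Then each of the following sets is contained in $\{M^{(1)}\}$: $\{(A^{(1)}M)^{(1)}A^{(1)}\}$, $\{C^{(1)}(MC^{(1)})^{(1)}\}$, $\{(A^{*}M)^{(1)}A^{*}\}$, $\{C^{*}(MC^{*})^{(1)}\}$, $\{(AA^{*}M)^{(1)}AA^{*}\}$, $\{C^{*}C(MC^{*}C)^{(1)}\}$, $\{C^{(1)}(A^{(1)}MC^{(1)})^{(1)}A^{(1)}\}$, $\{C^{*}(A^{*}MC^{*})^{(1)}A^{*}\}$, $\{[(AB)^{(1)}M]^{(1)}(AB)^{(1)}\}$, $\{(BC)^{(1)}[M(BC)^{(1)}]^{(1)}\}$, $\{[(AB)^{*}M]^{(1)}(AB)^{*}\}$, $\{(BC)^{*}[M(BC)^{*}]^{(1)}\}$, $\{[(ABB^{(1)})^{(1)}M]^{(1)}(ABB^{(1)})^{(1)}\}$, $\{(B^{(1)}BC)^{(1)}[M(B^{(1)}BC)^{(1)}]^{(1)}\}$, $\{[(ABB^{*})^{(1)}M]^{(1)}(ABB^{*})^{(1)}\}$, $\{(B^{*}BC)^{(1)}[M(B^{*}BC)^{(1)}]^{(1)}\}$, $\{C^{*}C(AA^{*}MC^{*}C)^{(1)}AA^{*}\}$, $\{(BC)^{(1)}[(AB)^{(1)}M(BC)^{(1)}]^{(1)}(AB)^{(1)}\}$, $\{(BC)^{*}[(AB)^{*}M(BC)^{*}]^{(1)}(AB)^{*}\}$,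 $\{(B^{(1)}BC)^{(1)}[(ABB^{(1)})^{(1)}M(B^{(1)}BC)^{(1)}]^{(1)}(ABB^{(1)})^{(1)}\}$, $\{(B^{*}BC)^{(1)}[(ABB^{*})^{(1)}M(B^{*}BC)^{(1)}]^{(1)}(ABB^{*})^{(1)}\}$, $\{(B^{(1)}BC)^{*}[(ABB^{(1)})^{*}M(B^{(1)}BC)^{*}]^{(1)}(ABB^{(1)})^{*}\}$, $\{(B^{*}BC)^{*}[(ABB^{*})^{*}M(B^{*}BC)^{*}]^{(1)}(ABB^{*})^{*}\}$.
   Context: For a complex matrix $X$, $X^*$ is its conjugate transpose. For $X\in\mathbb{C}^{p\times q}$, a matrix $G\in\mathbb{C}^{q\times p}$ is called an $\{i,\ldots,j\}$-generalized inverse of $X$ (written $X^{(i,\ldots,j)}$) if it satisfies the equations numbered $i,\ldots,j$ among the four Penrose equations (i) $XGX=X$, (ii) $GXG=G$, (iii) $(XG)^*=XG$, (iv) $(GX)^*=GX$; $\{X^{(i,\ldots,j)}\}$ denotes the set of all such $G$. For a matrix expression involving generalized inverses, $\{\cdot\}$ denotes the set of all values of the expression as each generalized inverse occurring in it ranges over all admissible choices; repeated occurrences of the same symbol (e.g. $(AB)^{(1)}$ appearing twice) denote one and the same choice, and a generalized inverse of a matrix that itself contains a chosen generalized inverse is taken with respect to that chosen matrix. *)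

(* Defs.v *)
(* Complex matrices are modelled over an arbitrary
   numClosedFieldType F (algebraically closed field with conjugation z^*,
   e.g. algC); this covers C^{m x n}. *)
From HB Require Import structures.
From mathcomp Require Import all_boot all_order all_algebra.
Set Implicit Arguments. Unset Strict Implicit. Unset Printing Implicit Defensive.
Import Order.TTheory GRing.Theory Num.Theory.
Local Open Scope ring_scope.

Definition ctr (F : numClosedFieldType) (m n : nat) (X : 'M[F]_(m, n)) : 'M[F]_(n, m) :=
  (map_mx (@Num.conj F) X)^T.

Definition g1 (F : numClosedFieldType) (p q : nat) (X : 'M[F]_(p, q)) (G : 'M[F]_(q, p)) : Prop :=
  X *m G *m X = X.

(* Main.v *)
Require Import Defs.
From HB Require Import structures.
From mathcomp Require Import all_boot all_order all_algebra.
Import GRing.Theory Num.Theory.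
Local Open Scope ring_scope.

Set Implicit Arguments.
Unset Strict Implicit.
Section L.
Variable F : numClosedFieldType.

Lemma ctrK m n (W : 'M[F]_(m, n)) : ctr (ctr W) = W.
Proof. by apply/matrixP => i j; rewrite /ctr !mxE conjCK. Qed.

Lemma ctrM m n k (X : 'M[F]_(m, n)) (Y : 'M[F]_(n, k)) :
  ctr (X *m Y) = ctr Y *m ctr X.
Proof. by rewrite /ctr map_mxM trmx_mul. Qed.

Lemma ctrW0 m n (W : 'M[F]_(m, n)) : ctr W *m W = 0 -> W = 0.
Proof.
move=> H; apply/matrixP => i j.
have := congr1 (fun Z : 'M_n => Z j j) H; rewrite !mxE /ctr.
  idtac.
under eq_bigr do rewrite !mxE mulrC -normCK.
move=> /psumr_eq0P h.
have /eqP := h (fun k _ => exprn_ge0 2 (normr_ge0 (W k j))) i isT.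
by rewrite expf_eq0 /= normr_eq0 => /eqP.
Qed.

Lemma ctr0 m n : ctr (0 : 'M[F]_(m, n)) = 0.
Proof. by apply/matrixP => i j; rewrite /ctr !mxE conjC0. Qed.

Lemma LC m n r (A : 'M[F]_(m, n)) (V : 'M_(n, r)) :
  ctr A *m (A *m V) = 0 -> A *m V = 0.
Proof. by move=> H; apply: ctrW0; rewrite ctrM -mulmxA H mulmx0. Qed.

Lemma RC r p q (V : 'M[F]_(r, p)) (C : 'M_(p, q)) :
  V *m C *m ctr C = 0 -> V *m C = 0.
Proof.
move=> H; rewrite -[V *m C]ctrK; have -> : ctr (V *m C) = 0; last exact: ctr0.
apply: ctrW0; rewrite ctrK ctrM mulmxA H; exact: mul0mx.
Qed.

Definition LP s m k (L : 'M[F]_(s, m)) (K : 'M_(m, k)) :=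
  forall r (Y : 'M_(k, r)), L *m (K *m Y) = 0 -> K *m Y = 0.
Definition RP q t k (R : 'M[F]_(q, t)) (K : 'M_(k, q)) :=
  forall r (Y : 'M_(r, k)), Y *m K *m R = 0 -> Y *m K = 0.

Lemma two m q s t (M : 'M[F]_(m,q)) (L : 'M_(s,m)) (R : 'M_(q,t)) (X : 'M_(t,s))
  k (K : 'M_(m,k)) (N : 'M_(k,q)) k' (N' : 'M_(m,k')) (K' : 'M_(k',q)) :
  M = K *m N -> M = N' *m K' -> LP L K -> RP R K' ->
  g1 (L *m M *m R) X -> g1 M (R *m X *m L).
Proof.
rewrite /g1 => eK eK' hL hR H.
have S1 : M *m R *m X *m L *m M *m R = M *m R.
  have -> : M *m R *m X *m L *m M *m R = K *m (N *m R *m X *m L *m M *m R).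
    by rewrite {1}eK !mulmxA.
  have -> : M *m R = K *m (N *m R) by rewrite eK mulmxA.
  apply/eqP; rewrite -subr_eq0 -mulmxBr; apply/eqP/hL.
  rewrite mulmxBr !mulmxA -eK mulmxBr !mulmxA.
  have -> : L *m M *m R *m X *m L *m M *m R = L *m M *m R *m X *m (L *m M *m R).
    by rewrite !mulmxA.
  by rewrite H subrr.
have -> : M *m (R *m X *m L) *m M = M *m R *m X *m L *m N' *m K'.
  by rewrite -[_ *m K']mulmxA -eK' !mulmxA.
rewrite [in RHS]eK'; apply/eqP; rewrite -subr_eq0 -mulmxBl; apply/eqP/hR.
by rewrite !mulmxBl -(mulmxA _ N' K') -eK' S1 eK' subrr.
Qed.

Lemma oneL m q s (M : 'M[F]_(m,q)) (L : 'M_(s,m)) (X : 'M_(q,s))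
  k (K : 'M_(m,k)) (N : 'M_(k,q)) :
  M = K *m N -> LP L K -> g1 (L *m M) X -> g1 M (X *m L).
Proof.
move=> e hL H; have := @two m q s q M L 1%:M X k K N q M 1%:M e (esym (mulmx1 M)) hL.
rewrite mul1mx mulmx1; apply => //.
by move=> r Y; rewrite !mulmx1.
Qed.

Lemma oneR m q t (M : 'M[F]_(m,q)) (R : 'M_(q,t)) (X : 'M_(t,m))
  k' (N' : 'M_(m,k')) (K' : 'M_(k',q)) :
  M = N' *m K' -> RP R K' -> g1 (M *m R) X -> g1 M (R *m X).
Proof.
move=> e hR H; have := @two m q m t M 1%:M R X m 1%:M M k' N' K' (esym (mul1mx M)) e.
rewrite mul1mx mulmx1; apply => //.
by move=> r Y; rewrite !mul1mx.
Qed.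

Lemma LPg' s m k (L : 'M[F]_(s, m)) (K : 'M_(m, k)) (P : 'M_(m, s)) :
  P *m L *m K = K -> LP L K.
Proof. by move=> H r Y e; rewrite -H -!mulmxA e !mulmx0. Qed.

Lemma RPg' q t k (R : 'M[F]_(q, t)) (K : 'M_(k, q)) (P : 'M_(t, q)) :
  K *m R *m P = K -> RP R K.
Proof. by move=> H r Y e; rewrite -H !mulmxA e !mul0mx. Qed.

Lemma LP23 m n p (A : 'M[F]_(m, n)) (B : 'M_(n, p)) :
  LP (ctr (A *m B *m ctr B)) (A *m B).
Proof.
move=> r Y; rewrite !ctrM ctrK => e.
apply: LC; rewrite ctrM -mulmxA; apply: (LC (A := ctr B)); rewrite ctrK.
by rewrite !mulmxA in e *.
Qed.

Lemma RP23 n p q (B : 'M[F]_(n, p)) (C : 'M_(p, q)) :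
  RP (ctr (ctr B *m B *m C)) (B *m C).
Proof.
move=> r Y; rewrite !ctrM ctrK => e.
apply: RC; rewrite ctrM mulmxA; apply: (RC (C := ctr B)); rewrite ctrK.
by rewrite !mulmxA in e *.
Qed.

Lemma K15 m n p (A : 'M[F]_(m, n)) (B : 'M_(n, p)) (G : 'M_(n, m)) :
  g1 (A *m B *m ctr B) G -> A *m B *m ctr B *m G *m (A *m B) = A *m B.
Proof.
rewrite /g1 => H.
have : (A *m B *m ctr B *m G *m A - A) *m B = 0.
  apply: RC; rewrite !mulmxBl -!mulmxA.
  by rewrite -!mulmxA in H; rewrite H subrr.
by rewrite mulmxBl !mulmxA => /eqP; rewrite subr_eq0 => /eqP.
Qed.

Lemma K16 n p q (B : 'M[F]_(n, p)) (C : 'M_(p, q)) (G : 'M_(q, p)) :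
  g1 (ctr B *m B *m C) G -> B *m C *m G *m (ctr B *m B *m C) = B *m C.
Proof.
rewrite /g1 => H.
have : B *m (C *m G *m (ctr B *m B *m C) - C) = 0.
  apply: LC; rewrite !mulmxBr !mulmxA.
  by rewrite !mulmxA in H; rewrite H subrr.
by rewrite mulmxBr !mulmxA => /eqP; rewrite subr_eq0 => /eqP.
Qed.

Lemma LPg m k (L : 'M[F]_(k, m)) (K : 'M_(m, k)) : g1 K L -> LP L K.
Proof. by rewrite /g1 => H r Y e; rewrite -H -!mulmxA e !mulmx0. Qed.

Lemma RPg q k (R : 'M[F]_(q, k)) (K : 'M_(k, q)) : g1 K R -> RP R K.
Proof. by rewrite /g1 => H r Y e; rewrite -H !mulmxA e !mul0mx. Qed.

Lemma LPc m k (K : 'M[F]_(m, k)) : LP (ctr K) K.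
Proof. by move=> r Y; apply: LC. Qed.

Lemma RPc q k (K : 'M[F]_(k, q)) : RP (ctr K) K.
Proof. by move=> r Y; apply: RC. Qed.

Lemma LPcc m k (K : 'M[F]_(m, k)) : LP (K *m ctr K) K.
Proof.
move=> r Y e; apply: LC; apply: (LC (A := ctr K)); rewrite ctrK.
by rewrite -!mulmxA in e *.
Qed.

Lemma RPcc q k (K : 'M[F]_(k, q)) : RP (ctr K *m K) K.
Proof.
move=> r Y e; apply: RC; apply: (RC (C := ctr K)); rewrite ctrK.
by rewrite !mulmxA in e *.
Qed.
End L.

Unset Implicit Arguments.
Set Strict Implicit.


Theorem theorem3p3 (F : numClosedFieldType) (m n p q : nat)
  (A : 'M[F]_(m, n)) (B : 'M[F]_(n, p)) (C : 'M[F]_(p, q)) :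
  let M := A *m B *m C in
  (* 1: (A^(1) M)^(1) A^(1) *)
  (forall (A1 : 'M_(n, m)) (X : 'M_(q, n)),
     g1 A A1 -> g1 (A1 *m M) X -> g1 M (X *m A1)) /\
  (* 2: C^(1) (M C^(1))^(1) *)
  (forall (C1 : 'M_(q, p)) (X : 'M_(p, m)),
     g1 C C1 -> g1 (M *m C1) X -> g1 M (C1 *m X)) /\
  (* 3: (A^H M)^(1) A^H *)
  (forall X : 'M_(q, n), g1 (ctr A *m M) X -> g1 M (X *m ctr A)) /\
  (* 4: C^H (M C^H )^(1) *)
  (forall X : 'M_(p, m), g1 (M *m ctr C) X -> g1 M (ctr C *m X)) /\
  (* 5: (A A^H M)^(1) A A^H *)
  (forall X : 'M_(q, m), g1 (A *m ctr A *m M) X -> g1 M (X *m (A *m ctr A))) /\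
  (* 6: C^H C (M C^H C)^(1) *)
  (forall X : 'M_(q, m), g1 (M *m (ctr C *m C)) X -> g1 M (ctr C *m C *m X)) /\
  (* 7: C^(1) (A^(1) M C^(1))^(1) A^(1) *)
  (forall (A1 : 'M_(n, m)) (C1 : 'M_(q, p)) (X : 'M_(p, n)),
     g1 A A1 -> g1 C C1 -> g1 (A1 *m M *m C1) X -> g1 M (C1 *m X *m A1)) /\
  (* 8: C^H (A^H M C^H )^(1) A^H *)
  (forall X : 'M_(p, n), g1 (ctr A *m M *m ctr C) X -> g1 M (ctr C *m X *m ctr A)) /\
  (* 9: [(AB)^(1) M]^(1) (AB)^(1) *)
  (forall (G : 'M_(p, m)) (X : 'M_(q, p)),
     g1 (A *m B) G -> g1 (G *m M) X -> g1 M (X *m G)) /\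
  (* 10: (BC)^(1) [M (BC)^(1)]^(1) *)
  (forall (G : 'M_(q, n)) (X : 'M_(n, m)),
     g1 (B *m C) G -> g1 (M *m G) X -> g1 M (G *m X)) /\
  (* 11: [(AB)^H M]^(1) (AB)^H *)
  (forall X : 'M_(q, p), g1 (ctr (A *m B) *m M) X -> g1 M (X *m ctr (A *m B))) /\
  (* 12: (BC)^H [M (BC)^H ]^(1) *)
  (forall X : 'M_(n, m), g1 (M *m ctr (B *m C)) X -> g1 M (ctr (B *m C) *m X)) /\
  (* 13: [(A B B^(1))^(1) M]^(1) (A B B^(1))^(1) *)
  (forall (B1 : 'M_(p, n)) (G : 'M_(n, m)) (X : 'M_(q, n)),
     g1 B B1 -> g1 (A *m B *m B1) G -> g1 (G *m M) X -> g1 M (X *m G)) /\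
  (* 14: (B^(1) B C)^(1) [M (B^(1) B C)^(1)]^(1) *)
  (forall (B1 : 'M_(p, n)) (G : 'M_(q, p)) (X : 'M_(p, m)),
     g1 B B1 -> g1 (B1 *m B *m C) G -> g1 (M *m G) X -> g1 M (G *m X)) /\
  (* 15: [(A B B^H )^(1) M]^(1) (A B B^H )^(1) *)
  (forall (G : 'M_(n, m)) (X : 'M_(q, n)),
     g1 (A *m B *m ctr B) G -> g1 (G *m M) X -> g1 M (X *m G)) /\
  (* 16: (B^H B C)^(1) [M (B^H B C)^(1)]^(1) *)
  (forall (G : 'M_(q, p)) (X : 'M_(p, m)),
     g1 (ctr B *m B *m C) G -> g1 (M *m G) X -> g1 M (G *m X)) /\
  (* 17: C^H C (A A^H M C^H C)^(1) A A^H *)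
  (forall X : 'M_(q, m),
     g1 (A *m ctr A *m M *m (ctr C *m C)) X -> g1 M (ctr C *m C *m X *m (A *m ctr A))) /\
  (* 18: (BC)^(1) [(AB)^(1) M (BC)^(1)]^(1) (AB)^(1) *)
  (forall (G1 : 'M_(p, m)) (G2 : 'M_(q, n)) (X : 'M_(n, p)),
     g1 (A *m B) G1 -> g1 (B *m C) G2 -> g1 (G1 *m M *m G2) X ->
     g1 M (G2 *m X *m G1)) /\
  (* 19: (BC)^H [(AB)^H M (BC)^H ]^(1) (AB)^H *)
  (forall X : 'M_(n, p),
     g1 (ctr (A *m B) *m M *m ctr (B *m C)) X ->
     g1 M (ctr (B *m C) *m X *m ctr (A *m B))) /\
  (* 20: (B^(1)BC)^(1) [(ABB^(1))^(1) M (B^(1)BC)^(1)]^(1) (ABB^(1))^(1),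
         one and the same B^(1) *)
  (forall (B1 : 'M_(p, n)) (G1 : 'M_(n, m)) (G2 : 'M_(q, p)) (X : 'M_(p, n)),
     g1 B B1 -> g1 (A *m B *m B1) G1 -> g1 (B1 *m B *m C) G2 ->
     g1 (G1 *m M *m G2) X -> g1 M (G2 *m X *m G1)) /\
  (* 21: (B^H BC)^(1) [(ABB^H )^(1) M (B^H BC)^(1)]^(1) (ABB^H )^(1) *)
  (forall (G1 : 'M_(n, m)) (G2 : 'M_(q, p)) (X : 'M_(p, n)),
     g1 (A *m B *m ctr B) G1 -> g1 (ctr B *m B *m C) G2 ->
     g1 (G1 *m M *m G2) X -> g1 M (G2 *m X *m G1)) /\
  (* 22: (B^(1)BC)^H [(ABB^(1))^H M (B^(1)BC)^H ]^(1) (ABB^(1))^H *)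
  (forall (B1 : 'M_(p, n)) (X : 'M_(p, n)),
     g1 B B1 ->
     g1 (ctr (A *m B *m B1) *m M *m ctr (B1 *m B *m C)) X ->
     g1 M (ctr (B1 *m B *m C) *m X *m ctr (A *m B *m B1))) /\
  (* 23: (B^H BC)^H [(ABB^H )^H M (B^H BC)^H ]^(1) (ABB^H )^H *)
  (forall X : 'M_(p, n),
     g1 (ctr (A *m B *m ctr B) *m M *m ctr (ctr B *m B *m C)) X ->
     g1 M (ctr (ctr B *m B *m C) *m X *m ctr (A *m B *m ctr B))).
Proof.
move=> M; subst M.
have BB1 : forall (B1 : 'M_(p, n)), g1 B B1 -> A *m B *m B1 *m (B *m C) = A *m B *m C.
  by move=> B1 hB; rewrite /g1 in hB; rewrite -[in RHS]hB !mulmxA.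
have BB1' : forall (B1 : 'M_(p, n)), g1 B B1 -> A *m B *m (B1 *m B *m C) = A *m B *m C.
  by move=> B1 hB; rewrite /g1 in hB; rewrite -[in RHS]hB !mulmxA.
repeat split.
- move=> A1 X hA; apply: (oneL (K:=A) (N:=B *m C)); [by rewrite mulmxA | exact: (LPg' (P:=A))].
- move=> C1 X hC; apply: (oneR (N':=A *m B) (K':=C)); [by [] | exact: (RPg' (P:=C))].
- move=> X; apply: (oneL (K:=A) (N:=B *m C)); [by rewrite mulmxA | exact: LPc].
- move=> X; apply: (oneR (N':=A *m B) (K':=C)); [by [] | exact: RPc].
- move=> X; apply: (oneL (K:=A) (N:=B *m C)); [by rewrite mulmxA | exact: LPcc].
- move=> X; apply: (oneR (N':=A *m B) (K':=C)); [by [] | exact: RPcc].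
- move=> A1 C1 X hA hC; apply: (two (K:=A) (N:=B *m C) (N':=A *m B) (K':=C)).
  + by rewrite mulmxA.
  + by [].
  + exact: (LPg' (P:=A)).
  + exact: (RPg' (P:=C)).
- move=> X; apply: (two (K:=A) (N:=B *m C) (N':=A *m B) (K':=C)).
  + by rewrite mulmxA.
  + by [].
  + exact: LPc.
  + exact: RPc.
- move=> G X hG; apply: (oneL (K:=A *m B) (N:=C)); [by [] | exact: (LPg' (P:=A *m B))].
- move=> G X hG; apply: (oneR (N':=A) (K':=B *m C)); [by rewrite mulmxA | exact: (RPg' (P:=B *m C))].
- move=> X; apply: (oneL (K:=A *m B) (N:=C)); [by [] | exact: LPc].
- move=> X; apply: (oneR (N':=A) (K':=B *m C)); [by rewrite mulmxA | exact: RPc].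
- move=> B1 G X hB hG; apply: (oneL (K:=A *m B) (N:=C)); first by [].
  apply: (LPg' (P:=A *m B *m B1)); rewrite /g1 in hB hG.
  have eAB : A *m B *m B1 *m B = A *m B by rewrite -[in RHS]hB !mulmxA.
    by rewrite -[X in _ *m X = _]eAB mulmxA hG eAB.
- move=> B1 G X hB hG; apply: (oneR (N':=A) (K':=B *m C)); first by rewrite mulmxA.
  apply: (RPg' (P:=B1 *m B *m C)); rewrite /g1 in hB hG.
  have eBC : B *m (B1 *m B *m C) = B *m C by rewrite !mulmxA hB.
    by rewrite -[X in X *m _ *m _ = _]eBC -(mulmxA B) -mulmxA hG eBC.
- move=> G X hG; apply: (oneL (K:=A *m B) (N:=C)); first by [].
  exact: (LPg' (P:=A *m B *m ctr B)) (K15 hG).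
- move=> G X hG; apply: (oneR (N':=A) (K':=B *m C)); first by rewrite mulmxA.
  exact: (RPg' (P:=ctr B *m B *m C)) (K16 hG).
- move=> X; apply: (two (K:=A) (N:=B *m C) (N':=A *m B) (K':=C)).
  + by rewrite mulmxA.
  + by [].
  + exact: LPcc.
  + exact: RPcc.
- move=> G1 G2 X h1 h2; apply: (two (K:=A *m B) (N:=C) (N':=A) (K':=B *m C)).
  + by [].
  + by rewrite mulmxA.
  + exact: (LPg' (P:=A *m B)).
  + exact: (RPg' (P:=B *m C)).
- move=> X; apply: (two (K:=A *m B) (N:=C) (N':=A) (K':=B *m C)).
  + by [].
  + by rewrite mulmxA.
  + exact: LPc.
  + exact: RPc.
- move=> B1 G1 G2 X hB h1 h2; apply: (two (K:=A *m B) (N:=C) (N':=A) (K':=B *m C)).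
  + by [].
  + by rewrite mulmxA.
  + apply: (LPg' (P:=A *m B *m B1)); rewrite /g1 in hB h1.
    have eAB : A *m B *m B1 *m B = A *m B by rewrite -[in RHS]hB !mulmxA.
    by rewrite -[X in _ *m X = _]eAB mulmxA h1 eAB.
  + apply: (RPg' (P:=B1 *m B *m C)); rewrite /g1 in hB h2.
    have eBC : B *m (B1 *m B *m C) = B *m C by rewrite !mulmxA hB.
    by rewrite -[X in X *m _ *m _ = _]eBC -(mulmxA B) -mulmxA h2 eBC.
- move=> G1 G2 X h1 h2; apply: (two (K:=A *m B) (N:=C) (N':=A) (K':=B *m C)).
  + by [].
  + by rewrite mulmxA.
  + exact: (LPg' (P:=A *m B *m ctr B)) (K15 h1).
  + exact: (RPg' (P:=ctr B *m B *m C)) (K16 h2).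
- move=> B1 X hB; apply: (two (K:=A *m B *m B1) (N:=B *m C) (N':=A *m B) (K':=B1 *m B *m C)).
  + by rewrite BB1.
  + by rewrite BB1'.
  + exact: LPc.
  + exact: RPc.
- move=> X; apply: (two (K:=A *m B) (N:=C) (N':=A) (K':=B *m C)).
  + by [].
  + by rewrite mulmxA.
  + exact: LP23.
  + exact: RP23.
Qed.
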